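(* Let $\alpha$ be a unit-speed curve in $\mathbb{R}^3$ with arc length $s$, nonzero curvature $\kappa$ and torsion $\tau$. Let $\alpha_T$ be its tangent indicatrix, and let $\beta$ be a Bertrand-direction curve of $\alpha_T$ with constant angle $\theta$ (so $X=\cos\theta\,T_T+\sin\theta\,B_T$). Then, at corresponding parameter values, $$\frac{-\sin\theta+(\tau_\beta/\kappa_\beta)\cos\theta}{\cos\theta+(\tau_\beta/\kappa_\beta)\sin\theta}=\frac{\kappa^2}{(\kappa^2+\tau^2)^{3/2}}\Big(\frac{\tau}{\kappa}\Big)',$$ where $'=d/ds$.
   Context: Let $\alpha:I\subset\mathbb{R}\to\mathbb{R}^3$ be a unit-speed curve with arc length $s$, curvature $\kappa>0$, torsion $\tau$ and Frenet frame $\{T,N,B\}$. Put $f=\tau/\kappa$ and $\sigma=\frac{\kappa^2}{(\kappa^2+\tau^2)^{3/2}}(\tau/\kappa)'$. The tangent indicatrix of $\alpha$ is the curve $\alpha_T=T$ on the unit sphere. Its arc length is $s_T=\int\kappa\,ds$, so parameters $s$ and $s_T(s)$ correspond. Its Frenet apparatus is $\{T_T,N_T,B_T,\kappa_T,\tau_T\}$, with $\frac{dT_T}{ds_T}=\kappa_TN_T$, $\frac{dN_T}{ds_T}=-\kappa_TT_T+\tau_TB_T$ and $\frac{dB_T}{ds_T}=-\tau_TN_T$. It is known that $\kappa_T=\sqrt{1+f^2}$ and $\tau_T=\sigma\sqrt{1+f^2}$. Let $x,y,z$ be real functions of $s_T$ with $x^2+y^2+z^2=1$, and set $X=xT_T+yN_T+zB_T$.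 An integral curve $\beta$ of $X$, meaning $d\beta/ds_T=X$, is an $X$-direction curve of $\alpha_T$. It is regarded as a unit-speed Frenet curve with frame $\{T_\beta=X,N_\beta,B_\beta\}$, curvature $\kappa_\beta>0$ and torsion $\tau_\beta$. $\beta$ is a Bertrand-direction curve of $\alpha_T$ if $N_\beta=N_T$; then $X=\cos\theta\,T_T+\sin\theta\,B_T$ for a constant $\theta$. *)

(* Defs.v *)
From Stdlib Require Import Reals.
From Coquelicot Require Import Coquelicot.
Open Scope R_scope.

Record vec3 : Type := V3 { vx : R ; vy : R ; vz : R }.

Definition vadd (a b : vec3) : vec3 := V3 (vx a + vx b) (vy a + vy b) (vz a + vz b).
Definition vscal (k : R) (a : vec3) : vec3 := V3 (k * vx a) (k * vy a) (k * vz a).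
Definition dot (a b : vec3) : R := vx a * vx b + vy a * vy b + vz a * vz b.
Definition cross (a b : vec3) : vec3 :=
  V3 (vy a * vz b - vz a * vy b)
     (vz a * vx b - vx a * vz b)
     (vx a * vy b - vy a * vx b).

Definition vderive (c : R -> vec3) (u : R) (v : vec3) : Prop :=
  is_derive (fun t => vx (c t)) u (vx v) /\
  is_derive (fun t => vy (c t)) u (vy v) /\
  is_derive (fun t => vz (c t)) u (vz v).

Definition pos_orthonormal (T N B : vec3) : Prop :=
  dot T T = 1 /\ dot N N = 1 /\ dot B B = 1 /\
  dot T N = 0 /\ dot T B = 0 /\ dot N B = 0 /\
  B = cross T N.

Definition frenet_apparatus (D : R -> Prop) (c T N B : R -> vec3) (k t : R -> R) : Prop :=
  forall u, D u ->
    vderive c u (T u) /\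
    vderive T u (vscal (k u) (N u)) /\
    vderive N u (vadd (vscal (- k u) (T u)) (vscal (t u) (B u))) /\
    vderive B u (vscal (- t u) (N u)) /\
    pos_orthonormal (T u) (N u) (B u) /\
    0 < k u.

Definition in_interval (a b : Rbar) (s : R) : Prop := Rbar_lt a (Finite s) /\ Rbar_lt (Finite s) b.

Definition image_interval (a b : Rbar) (phi : R -> R) (u : R) : Prop :=
  exists s : R, in_interval a b s /\ u = phi s.

(* Main.v *)
Require Import Defs.
From Stdlib Require Import Reals Lra Psatz.
From Coquelicot Require Import Coquelicot.
Open Scope R_scope.

Lemma vec3_eq (u v : vec3) : vx u = vx v -> vy u = vy v -> vz u = vz v -> u = v.
Proof. destruct u, v; simpl; intros; subst; reflexivity. Qed.

Lemma deriv_uniq (f : R -> R) (x l1 l2 : R) : is_derive f x l1 -> is_derive f x l2 -> l1 = l2.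
Proof. intros H1 H2. apply is_derive_unique in H1. apply is_derive_unique in H2. congruence. Qed.

Lemma vderive_uniq c u v1 v2 : vderive c u v1 -> vderive c u v2 -> v1 = v2.
Proof. intros [a [b c1]] [d [e f]]. apply vec3_eq; eapply deriv_uniq; eauto. Qed.

Lemma vderive_ext_loc (c1 c2 : R -> vec3) u v :
  locally u (fun t => c1 t = c2 t) -> vderive c1 u v -> vderive c2 u v.
Proof.
  intros L [a [b c]]. split; [|split]; eapply is_derive_ext_loc; try eassumption;
  eapply filter_imp; try exact L; intros t E; simpl; rewrite E; reflexivity.
Qed.

Lemma vderive_comp (c : R -> vec3) (g : R -> R) u v k :
  vderive c (g u) v -> is_derive g u k -> vderive (fun x => c (g x)) u (vscal k v).
Proof.
  intros [a [b c1]] G. split; [|split]; simpl;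
  [apply (is_derive_comp (fun t => vx (c t))) | apply (is_derive_comp (fun t => vy (c t))) |
   apply (is_derive_comp (fun t => vz (c t)))]; assumption.
Qed.

Lemma derive_dot (c1 c2 : R -> vec3) u v1 v2 :
  vderive c1 u v1 -> vderive c2 u v2 ->
  is_derive (fun x => dot (c1 x) (c2 x)) u (dot v1 (c2 u) + dot (c1 u) v2).
Proof.
  intros [a1 [b1 d1]] [a2 [b2 d2]]. unfold dot.
  assert (M := fun f g df dg (H1 : is_derive f u df) (H2 : is_derive g u dg) =>
      is_derive_mult f g u df dg H1 H2 (fun n m => Rmult_comm n m)).
  assert (P := fun f g df dg (H1 : is_derive f u df) (H2 : is_derive g u dg) =>
      @is_derive_plus _ R_NormedModule f g u df dg H1 H2).
  simpl in M, P. unfold plus, mult in *; simpl in *.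
  eapply is_derive_ext. intro t. reflexivity.
  replace (vx v1 * vx (c2 u) + vy v1 * vy (c2 u) + vz v1 * vz (c2 u) +
   (vx (c1 u) * vx v2 + vy (c1 u) * vy v2 + vz (c1 u) * vz v2)) with
   ((vx v1 * vx (c2 u) + vx (c1 u) * vx v2) + (vy v1 * vy (c2 u) + vy (c1 u) * vy v2)
    + (vz v1 * vz (c2 u) + vz (c1 u) * vz v2)) by ring.
  apply P; [apply P|]; apply M; assumption.
Qed.

Lemma vderive_lin (c1 c2 : R -> vec3) u v1 v2 a b :
  vderive c1 u v1 -> vderive c2 u v2 ->
  vderive (fun x => vadd (vscal a (c1 x)) (vscal b (c2 x))) u (vadd (vscal a v1) (vscal b v2)).
Proof.
  intros [a1 [b1 d1]] [a2 [b2 d2]].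
  assert (P := fun f g df dg (H1 : is_derive f u df) (H2 : is_derive g u dg) =>
      @is_derive_plus _ R_NormedModule f g u df dg H1 H2).
  unfold plus in P; simpl in P.
  split; [|split]; simpl; apply P; apply is_derive_scal; assumption.
Qed.

Lemma in_interval_locally a b s : in_interval a b s -> locally s (in_interval a b).
Proof.
  intros H. apply (open_and _ _ (open_Rbar_gt a) (open_Rbar_lt b)). exact H.
Qed.

Lemma dot_vadd_l a b c : dot (vadd a b) c = dot a c + dot b c.
Proof. destruct a, b, c; unfold dot, vadd; simpl; ring. Qed.
Lemma dot_vadd_r a b c : dot c (vadd a b) = dot c a + dot c b.
Proof. destruct a, b, c; unfold dot, vadd; simpl; ring. Qed.
Lemma dot_vscal_l k a c : dot (vscal k a) c = k * dot a c.
Proof. destruct a, c; unfold dot, vscal; simpl; ring. Qed.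
Lemma dot_vscal_r k a c : dot c (vscal k a) = k * dot c a.
Proof. destruct a, c; unfold dot, vscal; simpl; ring. Qed.
Lemma dot_comm a b : dot a b = dot b a.
Proof. destruct a, b; unfold dot; simpl; ring. Qed.
Lemma cross_vadd_l a b c : cross (vadd a b) c = vadd (cross a c) (cross b c).
Proof. destruct a, b, c; unfold cross, vadd; simpl; f_equal; ring. Qed.
Lemma cross_vadd_r a b c : cross c (vadd a b) = vadd (cross c a) (cross c b).
Proof. destruct a, b, c; unfold cross, vadd; simpl; f_equal; ring. Qed.
Lemma cross_vscal_l k a c : cross (vscal k a) c = vscal k (cross a c).
Proof. destruct a, c; unfold cross, vscal; simpl; f_equal; ring. Qed.
Lemma cross_vscal_r k a c : cross c (vscal k a) = vscal k (cross c a).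
Proof. destruct a, c; unfold cross, vscal; simpl; f_equal; ring. Qed.
Lemma bac_cab a b c : cross a (cross b c) = vadd (vscal (dot a c) b) (vscal (- dot a b) c).
Proof. destruct a, b, c; unfold cross, vscal, vadd, dot; simpl; f_equal; ring. Qed.
Lemma cross_anti a b : cross a b = vscal (-1) (cross b a).
Proof. destruct a, b; unfold cross, vscal; simpl; f_equal; ring. Qed.
Lemma vscal_inj k a b : k <> 0 -> vscal k a = vscal k b -> a = b.
Proof.
  intros Hk E. destruct a, b; unfold vscal in E; injection E; intros.
  f_equal; apply (Rmult_eq_reg_l k); auto.
Qed.
Lemma vscal_vscal k l a : vscal k (vscal l a) = vscal (k * l) a.
Proof. destruct a; unfold vscal; simpl; f_equal; ring. Qed.

Ltac sdot := repeat rewrite ?dot_vadd_l, ?dot_vadd_r, ?dot_vscal_l, ?dot_vscal_r.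
Ltac sdot_in H := repeat rewrite ?dot_vadd_l, ?dot_vadd_r, ?dot_vscal_l, ?dot_vscal_r in H.

Theorem corollary5p6
  (a b : Rbar)
  (alpha T N B : R -> vec3) (kappa tau : R -> R)
  (Halpha : frenet_apparatus (in_interval a b) alpha T N B kappa tau)
  (df : R -> R)
  (Hdf : forall s : R, in_interval a b s ->
           is_derive (fun x : R => tau x / kappa x) s (df s))
  (* arc length s_T of the tangent indicatrix: ds_T/ds = kappa *)
  (sT : R -> R)
  (HsT : forall s : R, in_interval a b s -> is_derive sT s (kappa s))
  (alphaT TT NT BT : R -> vec3) (kT tT : R -> R)
  (HalphaT_def : forall s : R, in_interval a b s -> alphaT (sT s) = T s)
  (HalphaT : frenet_apparatus (image_interval a b sT) alphaT TT NT BT kT tT)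
  (* Bertrand-direction curve beta of alpha_T with constant angle theta:
     T_beta = X = cos theta T_T + sin theta B_T, N_beta = N_T *)
  (theta : R)
  (beta Bb : R -> vec3) (kb tb : R -> R)
  (Hbeta : frenet_apparatus (image_interval a b sT)
             beta
             (fun u => vadd (vscal (cos theta) (TT u)) (vscal (sin theta) (BT u)))
             NT Bb kb tb) :
  forall s : R, in_interval a b s ->
    (- sin theta + (tb (sT s) / kb (sT s)) * cos theta) /
    (cos theta + (tb (sT s) / kb (sT s)) * sin theta)
    = kappa s ^ 2 / Rpower (kappa s ^ 2 + tau s ^ 2) (3 / 2) * df s.

  intros s Hs.
  assert (Img : forall x, in_interval a b x -> image_interval a b sT (sT x)).
  { intros x Hx. exists x. split; auto. }
  assert (F1 : forall x, in_interval a b x -> TT (sT x) = N x).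
  { intros x Hx.
    destruct (HalphaT _ (Img x Hx)) as [D1 _].
    destruct (Halpha x Hx) as [_ [D2 [_ [_ [_ Hk]]]]].
    assert (D3 := vderive_comp _ _ _ _ _ D1 (HsT x Hx)).
    apply (vderive_ext_loc _ T) in D3.
    2:{ eapply filter_imp; [|exact (in_interval_locally _ _ _ Hx)]. intros t Ht. auto. }
    apply (vscal_inj (kappa x)). lra. eapply vderive_uniq; eauto. }
  assert (F2 : forall x, in_interval a b x ->
     vscal (kappa x * kT (sT x)) (NT (sT x)) = vadd (vscal (- kappa x) (T x)) (vscal (tau x) (B x))).
  { intros x Hx.
    destruct (HalphaT _ (Img x Hx)) as [_ [D1 _]].
    destruct (Halpha x Hx) as [_ [_ [D2 _]]].
    assert (D3 := vderive_comp _ _ _ _ _ D1 (HsT x Hx)).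
    apply (vderive_ext_loc _ N) in D3.
    2:{ eapply filter_imp; [|exact (in_interval_locally _ _ _ Hx)]. intros t Ht. auto. }
    rewrite <- vscal_vscal. eapply vderive_uniq; eauto. }
  assert (PH : forall x, in_interval a b x ->
     dot (NT (sT x)) (B x) = - (tau x / kappa x) * dot (NT (sT x)) (T x)).
  { intros x Hx.
    destruct (HalphaT _ (Img x Hx)) as [_ [_ [_ [_ [_ HkT]]]]].
    destruct (Halpha x Hx) as [_ [_ [_ [_ [[o1 [o2 [o3 [o4 [o5 [o6 o7]]]]]] Hk]]]]].
    assert (E := F2 x Hx).
    assert (En : NT (sT x) = vscal (/ (kappa x * kT (sT x)))
       (vadd (vscal (- kappa x) (T x)) (vscal (tau x) (B x)))).
    { rewrite <- E, vscal_vscal. destruct (NT (sT x)); unfold vscal; simpl.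
      f_equal; field; lra. }
    rewrite En. sdot. rewrite (dot_comm (B x) (T x)), o1, o3, o5. field. lra. }
  destruct (HalphaT _ (Img s Hs)) as [_ [D1T [D1N [D1B [[q1 [q2 [q3 [q4 [q5 [q6 q7]]]]]] HkT]]]]].
  destruct (Halpha s Hs) as [_ [D2T [D2N [D2B [[o1 [o2 [o3 [o4 [o5 [o6 o7]]]]]] Hk]]]]].
  destruct (Hbeta _ (Img s Hs)) as [_ [D3T [D3N [_ [[r1 [r2 [r3 [r4 [r5 [r6 r7]]]]]] Hkb]]]]].
  set (u := sT s) in *.
  assert (G := vderive_comp _ _ _ _ _ D1N (HsT s Hs)).
  assert (Hh := derive_dot _ _ _ _ _ G D2T).
  assert (Hp := derive_dot _ _ _ _ _ G D2B).
  assert (Hf := Hdf s Hs).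
  assert (Hq := is_derive_mult _ _ _ _ _ Hf Hh (fun n m => Rmult_comm n m)).
  apply is_derive_opp in Hq.
  apply (is_derive_ext_loc _ (fun x => dot (NT (sT x)) (B x))) in Hq.
  2:{ eapply filter_imp; [|exact (in_interval_locally _ _ _ Hs)]. intros t Ht.
      rewrite PH; auto. unfold opp, mult; simpl. ring. }
  assert (PE := deriv_uniq _ _ _ _ Hq Hp). clear Hq Hp Hh G.
  unfold opp, mult, plus in PE; simpl in PE.
  assert (En : NT u = vscal (/ (kappa s * kT u))
       (vadd (vscal (- kappa s) (T s)) (vscal (tau s) (B s)))).
  { rewrite <- (F2 s Hs), vscal_vscal; fold u. destruct (NT u); unfold vscal; simpl.
    f_equal; field; lra. }
  assert (ETT := F1 s Hs). fold u in ETT.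
  assert (NB : cross (N s) (B s) = T s).
  { rewrite o7, bac_cab, (dot_comm (N s) (T s)), o2, o4. destruct (T s), (N s); unfold vscal, vadd; simpl; f_equal; ring. }
  assert (NT_ : cross (N s) (T s) = vscal (-1) (B s)).
  { rewrite cross_anti, o7. reflexivity. }
  assert (EBT : BT u = vscal (/ (kappa s * kT u))
       (vadd (vscal (tau s) (T s)) (vscal (kappa s) (B s)))).
  { rewrite q7, ETT, En, cross_vscal_r, cross_vadd_r, !cross_vscal_r, NB, NT_.
    destruct (T s), (B s); unfold vscal, vadd; simpl; f_equal; ring. }
  assert (o4' : dot (N s) (T s) = 0) by (rewrite dot_comm; auto).
  assert (o5' : dot (B s) (T s) = 0) by (rewrite dot_comm; auto).
  assert (o6' : dot (B s) (N s) = 0) by (rewrite dot_comm; auto).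
  assert (q4' : dot (NT u) (TT u) = 0) by (rewrite dot_comm; auto).
  assert (q5' : dot (BT u) (TT u) = 0) by (rewrite dot_comm; auto).
  assert (q6' : dot (BT u) (NT u) = 0) by (rewrite dot_comm; auto).
  assert (r6' : dot (Bb u) (NT u) = 0) by (rewrite dot_comm; auto).
  assert (r5' : dot (Bb u) (vadd (vscal (cos theta) (TT u)) (vscal (sin theta) (BT u))) = 0) by (rewrite dot_comm; auto).
  assert (KT2 : (kappa s * kT u) ^ 2 = kappa s ^ 2 + tau s ^ 2).
  { rewrite En in q2. sdot_in q2. rewrite o1, o3, o5, o5' in q2. field_simplify in q2; [|lra].
    apply Rmult_eq_compat_r with (r := (kappa s * kT u)^2) in q2.
    field_simplify in q2; [|lra]. lra. }
  assert (PE2 : tT u * (kappa s ^ 2 + tau s ^ 2) = kappa s * df s).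
  { fold u in PE. rewrite ETT, En, EBT in PE. sdot_in PE.
    rewrite ?o1, ?o2, ?o3, ?o4, ?o5, ?o6, ?o4', ?o5', ?o6' in PE.
    apply Rmult_eq_compat_l with (r := kappa s * kT u) in PE. field_simplify in PE; try lra. }
  assert (EX := vderive_uniq _ _ _ _ D3T (vderive_lin _ _ _ _ _ (cos theta) (sin theta) D1T D1B)).
  apply (f_equal (fun v => dot v (NT u))) in EX. sdot_in EX.
  rewrite ?q2, ?q4', ?q6', ?q4, ?q6 in EX.
  assert (EN := vderive_uniq _ _ _ _ D3N D1N).
  apply (f_equal (fun v => dot v (Bb u))) in EN.
  assert (BbE : Bb u = vadd (vscal (cos theta) (BT u)) (vscal (- sin theta) (TT u))).
  { assert (CB : cross (BT u) (NT u) = vscal (-1) (TT u)).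
    { rewrite q7, cross_anti, bac_cab, q2, q4'.
      destruct (TT u), (NT u); unfold vscal, vadd; simpl; f_equal; ring. }
    rewrite r7, cross_vadd_l, !cross_vscal_l, <- q7, CB.
    destruct (BT u), (TT u); unfold vscal, vadd; simpl; f_equal; ring. }
  sdot_in EN. rewrite ?r3, ?r5', ?r6 in EN. rewrite BbE in EN. sdot_in EN. rewrite ?q1, ?q3, ?q5, ?q5', ?q4, ?q4', ?q6, ?q6' in EN.
  assert (SC : sin theta ^ 2 + cos theta ^ 2 = 1) by (rewrite <- (sin2_cos2 theta); unfold Rsqr; ring).
  assert (Hkb2 : kb u = cos theta * kT u - sin theta * tT u) by lra.
  assert (Htb : tb u = sin theta * kT u + cos theta * tT u).
  { match type of EN with ?L = _ => replace (tb u) with L by ring end.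
    rewrite EN; ring. }
  assert (A1 : - sin theta * kb u + tb u * cos theta = tT u).
  { rewrite Hkb2, Htb. transitivity (tT u * (sin theta ^2 + cos theta ^2)); [ring | rewrite SC; ring]. }
  assert (A2 : cos theta * kb u + tb u * sin theta = kT u).
  { rewrite Hkb2, Htb. transitivity (kT u * (sin theta ^2 + cos theta ^2)); [ring | rewrite SC; ring]. }
  replace (- sin theta + tb u / kb u * cos theta) with ((- sin theta * kb u + tb u * cos theta) / kb u) by (field; lra).
  replace (cos theta + tb u / kb u * sin theta) with ((cos theta * kb u + tb u * sin theta) / kb u) by (field; lra).
  rewrite A1, A2.
  replace (3 / 2) with (1 + / 2) by field.
  rewrite Rpower_plus, <- KT2, Rpower_1, Rpower_sqrt, sqrt_pow2.
  2: nra. 2: nra. 2: nra.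
  rewrite <- KT2 in PE2.
  assert (Hdf2 : df s = tT u * (kappa s * kT u) ^ 2 / kappa s) by (rewrite PE2; field; lra).
  rewrite Hdf2 in *. field. split; lra.
Qed.
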